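(* There exist a finitely generated torsion-free group $G$ and a finitely generated subgroup $H\leqslant G$ such that the spectrum $\mathrm{Ord}_H(G)$ is not computably enumerable; and there also exist a finitely generated torsion-free group $G$ and a finitely generated subgroup $H\leqslant G$ such that $\mathrm{Ord}_H(G)$ is computably enumerable but not computable.
   Context: For a group $G$, a subset $S\subseteq G$ and $g\in G$, $\mathrm{Ord}_S(g)=\min\{k\geq 1: g^k\in S\}$ if such $k$ exists and $0$ otherwise; the spectrum is $\mathrm{Ord}_S(G)=\{\mathrm{Ord}_S(g):g\in G\}\subseteq\mathbb{N}$. *)

(* Defs.v *)
From Stdlib Require Import List Arith.
Import ListNotations.
Set Implicit Arguments.

Record group := Group {
  carrier :> Type;
  gmul : carrier -> carrier -> carrier;
  gone : carrier;
  ginv : carrier -> carrier;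
  gmulA : forall x y z, gmul x (gmul y z) = gmul (gmul x y) z;
  gmul1l : forall x, gmul gone x = x;
  gmul1r : forall x, gmul x gone = x;
  gmulVl : forall x, gmul (ginv x) x = gone;
  gmulVr : forall x, gmul x (ginv x) = gone
}.

Fixpoint gpow (G : group) (g : G) (k : nat) : G :=
  match k with 0 => gone G | S k' => gmul G g (@gpow G g k') end.
Arguments gpow {G} g k.

Inductive in_gen (G : group) (S : list G) : G -> Prop :=
| gen_one : in_gen G S (gone G)
| gen_mul : forall s x, In s S -> in_gen G S x -> in_gen G S (gmul G s x)
| gen_mulV : forall s x, In s S -> in_gen G S x -> in_gen G S (gmul G (ginv G s) x).
Arguments in_gen {G} S _.

Definition finitely_generated (G : group) : Prop :=
  exists S : list G, forall x : G, in_gen S x.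

Definition torsion_free (G : group) : Prop :=
  forall (g : G) (k : nat), 1 <= k -> gpow g k = gone G -> g = gone G.

Definition Ord_is (G : group) (S : G -> Prop) (g : G) (n : nat) : Prop :=
  (1 <= n /\ S (gpow g n) /\ forall k, 1 <= k -> k < n -> ~ S (gpow g k))
  \/ (n = 0 /\ forall k, 1 <= k -> ~ S (gpow g k)).
Arguments Ord_is {G} S g n.

Definition spectrum (G : group) (S : G -> Prop) (n : nat) : Prop :=
  exists g : G, Ord_is S g n.
Arguments spectrum {G} S n.

(** * Partial recursive functions (Kleene), untyped arities with defaults *)
Inductive prf : Type :=
| PZero : prf
| PSucc : prf
| PProj : nat -> prf
| PComp : prf -> list prf -> prf
| PPrim : prf -> prf -> prf
| PMu : prf -> prf.

Inductive eval : prf -> list nat -> nat -> Prop :=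
| ev_zero : forall v, eval PZero v 0
| ev_succ : forall v, eval PSucc v (S (hd 0 v))
| ev_proj : forall i v, eval (PProj i) v (nth i v 0)
| ev_comp : forall f gs v ys y,
    evals gs v ys -> eval f ys y -> eval (PComp f gs) v y
| ev_prim0 : forall f g v y, eval f v y -> eval (PPrim f g) (0 :: v) y
| ev_primS : forall f g n v r y,
    eval (PPrim f g) (n :: v) r -> eval g (n :: r :: v) y ->
    eval (PPrim f g) (S n :: v) y
| ev_mu : forall f v n,
    eval f (n :: v) 0 ->
    (forall m, m < n -> exists k, eval f (m :: v) (S k)) ->
    eval (PMu f) v n
with evals : list prf -> list nat -> list nat -> Prop :=
| evs_nil : forall v, evals [] v []
| evs_cons : forall g gs v y ys,
    eval g v y -> evals gs v ys -> evals (g :: gs) v (y :: ys).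

Definition comp_enum (A : nat -> Prop) : Prop :=
  exists f : prf, forall n, A n <-> exists y, eval f [n] y.

Definition computable (A : nat -> Prop) : Prop :=
  exists f : prf, forall n, (A n -> eval f [n] 1) /\ (~ A n -> eval f [n] 0).

(* Main.v *)
Require Import Defs.
From Stdlib Require Import List Arith.
From Stdlib Require Import Lia ZArith QArith Qcanon.
From Stdlib Require Import FunctionalExtensionality ProofIrrelevance ClassicalEpsilon.
Import ListNotations.
Open Scope nat_scope.

Lemma evals2 a b v x y : eval a v x -> eval b v y -> evals [a; b] v [x; y].
Proof. intros; repeat constructor; auto. Qed.
Lemma evals1 a v x : eval a v x -> evals [a] v [x].
Proof. intros; repeat constructor; auto. Qed.
Lemma evals3 a b c v x y z : eval a v x -> eval b v y -> eval c v z -> evals [a; b; c] v [x; y; z].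
Proof. intros; repeat constructor; auto. Qed.

Lemma prim_ok F G f g :
  (forall w, eval F w (f w)) -> (forall w, eval G w (g w)) ->
  forall N v, eval (PPrim F G) (N :: v) (nat_rect (fun _ => nat) (f v) (fun k r => g (k :: r :: v)) N).
Proof.
  intros HF HG N v; induction N; simpl.
  - constructor; auto.
  - econstructor; eauto.
Qed.

Definition padd := PPrim (PProj 0) (PComp PSucc [PProj 1]).
Lemma padd_ok x y : eval padd [x; y] (x + y).
Proof.
  assert (H := prim_ok (PProj 0) (PComp PSucc [PProj 1]) (fun w => nth 0 w 0) (fun w => S (nth 1 w 0))).
  replace (x + y) with (nat_rect (fun _ => nat) (nth 0 [y] 0) (fun k r => S (nth 1 (k :: r :: [y]) 0)) x).
  - apply H; intros; [constructor|]. econstructor; [apply evals1; constructor|]. constructor.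
  - induction x; simpl in *; auto.
Qed.

Definition ppred := PPrim PZero (PProj 0).
Lemma ppred_ok x : eval ppred [x] (pred x).
Proof.
  assert (H := prim_ok PZero (PProj 0) (fun w => 0) (fun w => nth 0 w 0)).
  replace (pred x) with (nat_rect (fun _ => nat) 0 (fun k r => nth 0 (k :: r :: []) 0) x).
  - apply H; intros; constructor.
  - destruct x; reflexivity.
Qed.

Definition psub := PComp (PPrim (PProj 0) (PComp ppred [PProj 1])) [PProj 1; PProj 0].
Lemma psub_ok x y : eval psub [x; y] (x - y).
Proof.
  unfold psub. econstructor. apply evals2; constructor. simpl.
  assert (H := prim_ok (PProj 0) (PComp ppred [PProj 1]) (fun w => nth 0 w 0) (fun w => pred (nth 1 w 0))).
  replace (x - y) with (nat_rect (fun _ => nat) (nth 0 [x] 0) (fun k r => pred (nth 1 (k :: r :: [x]) 0)) y).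
  - apply H; intros; [constructor|]. econstructor; [apply evals1; constructor|]. apply ppred_ok.
  - simpl. induction y; simpl; [lia|]. rewrite IHy. lia.
Qed.

Definition pmul := PPrim PZero (PComp padd [PProj 1; PProj 2]).
Lemma pmul_ok x y : eval pmul [x; y] (x * y).
Proof.
  assert (H := prim_ok PZero (PComp padd [PProj 1; PProj 2]) (fun w => 0) (fun w => nth 1 w 0 + nth 2 w 0)).
  replace (x * y) with (nat_rect (fun _ => nat) 0 (fun k r => nth 1 (k :: r :: [y]) 0 + nth 2 (k :: r :: [y]) 0) x).
  - apply H; intros; [constructor|]. econstructor; [apply evals2; constructor|]. apply padd_ok.
  - simpl. induction x; simpl; [lia|]. rewrite IHx. lia.
Qed.

Definition sel (c a b : nat) : nat := match c with 0 => a | S _ => b end.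
Definition psel := PPrim (PProj 0) (PProj 3).
Lemma psel_ok c a b : eval psel [c; a; b] (sel c a b).
Proof.
  assert (H := prim_ok (PProj 0) (PProj 3) (fun w => nth 0 w 0) (fun w => nth 3 w 0)).
  replace (sel c a b) with (nat_rect (fun _ => nat) (nth 0 [a; b] 0) (fun k r => nth 3 (k :: r :: [a; b]) 0) c).
  - apply H; intros; constructor.
  - destruct c; reflexivity.
Qed.

Inductive exp :=
| EVar (i : nat) | EZero | ESucc (e : exp) | EAdd (a b : exp) | ESub (a b : exp)
| EMul (a b : exp) | ESel (c a b : exp) | ERec (base step n a : exp)
| ECall1 (body a : exp) | ECall2 (body a b : exp) | ECall3 (body a b c : exp).

Fixpoint den (e : exp) (v : list nat) : nat :=
  match e with
  | EVar i => nth i v 0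
  | EZero => 0
  | ESucc e => S (den e v)
  | EAdd a b => den a v + den b v
  | ESub a b => den a v - den b v
  | EMul a b => den a v * den b v
  | ESel c a b => sel (den c v) (den a v) (den b v)
  | ERec b s n a => nat_rect (fun _ => nat) (den b [den a v]) (fun k r => den s [k; r; den a v]) (den n v)
  | ECall1 b x => den b [den x v]
  | ECall2 b x y => den b [den x v; den y v]
  | ECall3 b x y z => den b [den x v; den y v; den z v]
  end.

Fixpoint cmp (e : exp) : prf :=
  match e with
  | EVar i => PProj i
  | EZero => PZero
  | ESucc e => PComp PSucc [cmp e]
  | EAdd a b => PComp padd [cmp a; cmp b]
  | ESub a b => PComp psub [cmp a; cmp b]
  | EMul a b => PComp pmul [cmp a; cmp b]
  | ESel c a b => PComp psel [cmp c; cmp a; cmp b]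
  | ERec b s n a => PComp (PPrim (cmp b) (cmp s)) [cmp n; cmp a]
  | ECall1 b x => PComp (cmp b) [cmp x]
  | ECall2 b x y => PComp (cmp b) [cmp x; cmp y]
  | ECall3 b x y z => PComp (cmp b) [cmp x; cmp y; cmp z]
  end.

Lemma cmp_ok e : forall v, eval (cmp e) v (den e v).
Proof.
  induction e; intros v; simpl.
  - constructor.
  - constructor.
  - econstructor; [apply evals1; eauto|]. constructor.
  - econstructor; [apply evals2; eauto|]. apply padd_ok.
  - econstructor; [apply evals2; eauto|]. apply psub_ok.
  - econstructor; [apply evals2; eauto|]. apply pmul_ok.
  - econstructor; [apply evals3; eauto|]. apply psel_ok.
  - econstructor; [apply evals2; eauto|].
    apply (prim_ok (cmp e1) (cmp e2) (den e1) (den e2)); auto.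
  - econstructor; [apply evals1; eauto|]. auto.
  - econstructor; [apply evals2; eauto|]. auto.
  - econstructor; [apply evals3; eauto|]. auto.
Qed.

Section Ind.
Variable P : prf -> list nat -> nat -> Prop.
Variable Q : list prf -> list nat -> list nat -> Prop.
Hypothesis h_zero : forall v, P PZero v 0.
Hypothesis h_succ : forall v, P PSucc v (S (hd 0 v)).
Hypothesis h_proj : forall i v, P (PProj i) v (nth i v 0).
Hypothesis h_comp : forall f gs v ys y, evals gs v ys -> Q gs v ys -> eval f ys y -> P f ys y -> P (PComp f gs) v y.
Hypothesis h_prim0 : forall f g v y, eval f v y -> P f v y -> P (PPrim f g) (0 :: v) y.
Hypothesis h_primS : forall f g n v r y, eval (PPrim f g) (n :: v) r -> P (PPrim f g) (n :: v) r ->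
    eval g (n :: r :: v) y -> P g (n :: r :: v) y -> P (PPrim f g) (S n :: v) y.
Hypothesis h_mu : forall f v n, eval f (n :: v) 0 -> P f (n :: v) 0 ->
    (forall m, m < n -> exists k, eval f (m :: v) (S k) /\ P f (m :: v) (S k)) -> P (PMu f) v n.
Hypothesis h_nil : forall v, Q [] v [].
Hypothesis h_cons : forall g gs v y ys, eval g v y -> P g v y -> evals gs v ys -> Q gs v ys -> Q (g :: gs) v (y :: ys).

Fixpoint eval_ind3 t v y (H : eval t v y) {struct H} : P t v y :=
  match H in eval t v y return P t v y with
  | ev_zero v => h_zero v
  | ev_succ v => h_succ v
  | ev_proj i v => h_proj i v
  | ev_comp Hs Hf => h_comp _ _ _ _ _ Hs (evals_ind3 _ _ _ Hs) Hf (eval_ind3 _ _ _ Hf)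
  | ev_prim0 g H1 => h_prim0 _ g _ _ H1 (eval_ind3 _ _ _ H1)
  | ev_primS H1 H2 => h_primS _ _ _ _ _ _ H1 (eval_ind3 _ _ _ H1) H2 (eval_ind3 _ _ _ H2)
  | ev_mu H0 Hlt => h_mu _ _ _ H0 (eval_ind3 _ _ _ H0)
      (fun m hm => match Hlt m hm with ex_intro _ k Hk => ex_intro _ k (conj Hk (eval_ind3 _ _ _ Hk)) end)
  end
with evals_ind3 gs v ys (H : evals gs v ys) {struct H} : Q gs v ys :=
  match H in evals gs v ys return Q gs v ys with
  | evs_nil v => h_nil v
  | evs_cons H1 H2 => h_cons _ _ _ _ _ H1 (eval_ind3 _ _ _ H1) H2 (evals_ind3 _ _ _ H2)
  end.
End Ind.

Lemma eval_det : forall t v y, eval t v y -> forall y', eval t v y' -> y = y'.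
Proof.
  apply (eval_ind3 (fun t v y => forall y', eval t v y' -> y = y')
                   (fun gs v ys => forall ys', evals gs v ys' -> ys = ys')); intros.
  - inversion H; auto.
  - inversion H; auto.
  - inversion H; auto.
  - inversion H3; subst. apply H0 in H6; subst. auto.
  - inversion H1; subst. auto.
  - inversion H3; subst. apply H0 in H9; subst. auto.
  - inversion H2; subst.
    destruct (lt_eq_lt_dec n y') as [[Hl|He]|Hl]; auto.
    + destruct (H5 _ Hl) as [k Hk]. apply H0 in Hk. discriminate.
    + destruct (H1 _ Hl) as [k [Hk1 Hk2]]. apply Hk2 in H4. discriminate.
  - inversion H; auto.
  - inversion H3; subst. f_equal; auto.
Qed.

Lemma mu_char F fF : (forall w, eval F w (fF w)) ->
  forall v n, eval (PMu F) v n <-> (fF (n :: v) = 0 /\ forall m, m < n -> fF (m :: v) <> 0).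
Proof.
  intros HF v n; split.
  - intros H; inversion H; subst. split.
    + eapply eval_det; eauto.
    + intros m Hm E. match goal with HH : forall m, m < n -> exists k, _ |- _ => destruct (HH _ Hm) as [k Hk] end. specialize (HF (m :: v)). rewrite E in HF.
      pose proof (eval_det _ _ _ Hk _ HF). discriminate.
  - intros [H1 H2]. constructor.
    + rewrite <- H1; auto.
    + intros m Hm. specialize (H2 _ Hm). destruct (fF (m :: v)) eqn:E; [congruence|].
      exists n0. rewrite <- E; auto.
Qed.

Lemma mu_halts F fF : (forall w, eval F w (fF w)) ->
  forall v, (exists y, eval (PMu F) v y) <-> (exists n, fF (n :: v) = 0).
Proof.
  intros HF v; split.
  - intros [y Hy]. apply (mu_char F fF HF) in Hy. exists y; tauto.
  - intros [n Hn].
    assert (forall k, (exists y, eval (PMu F) v y) \/ forall m, m < k -> fF (m :: v) <> 0) as Hk.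
    { induction k.
      - right. intros; lia.
      - destruct IHk as [Hy|Hy]; [left; auto|].
        destruct (fF (k :: v)) eqn:E.
        + left. exists k. apply (mu_char F fF HF). auto.
        + right. intros m Hm. assert (m < k \/ m = k) as [|] by lia; subst; auto; congruence. }
    destruct (Hk (S n)) as [Hy|Hy]; auto.
    exfalso. apply (Hy n); auto.
Qed.

Definition pr x y := sel (S x - y) (y*y + x) (x*x + x + y).
Definition p1 z := let s := Nat.sqrt z in let r := z - s*s in sel (S r - s) r s.
Definition p2 z := let s := Nat.sqrt z in let r := z - s*s in sel (S r - s) s (r - s).

Lemma pr_12 x y : p1 (pr x y) = x /\ p2 (pr x y) = y.
Proof.
  unfold pr, p1, p2.
  destruct (S x - y) eqn:E; cbn [sel].
  - assert (Nat.sqrt (y*y+x) = y) as -> by (apply Nat.sqrt_unique; nia).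
    replace (y * y + x - y * y) with x by lia.
    rewrite E. split; reflexivity.
  - assert (Nat.sqrt (x*x+x+y) = x) as -> by (apply Nat.sqrt_unique; nia).
    replace (x * x + x + y - x * x) with (x + y) by lia.
    destruct (S (x + y) - x) eqn:E2; [lia|]. split; cbn [sel]; lia.
Qed.
Lemma p1_pr x y : p1 (pr x y) = x. Proof. apply pr_12. Qed.
Lemma p2_pr x y : p2 (pr x y) = y. Proof. apply pr_12. Qed.
Lemma pr_inj x y x' y' : pr x y = pr x' y' -> x = x' /\ y = y'.
Proof. intros H. split; [rewrite <- (p1_pr x y), H, p1_pr | rewrite <- (p2_pr x y), H, p2_pr]; auto. Qed.
Global Arguments pr : simpl never.
Global Arguments p1 : simpl never.
Global Arguments p2 : simpl never.

Definition cns x l := S (pr x l).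
Fixpoint encl (v : list nat) : nat := match v with [] => 0 | x :: v => cns x (encl v) end.
Fixpoint enc (t : prf) : nat :=
  match t with
  | PZero => pr 0 0
  | PSucc => pr 1 0
  | PProj i => pr 2 i
  | PComp f gs => pr 3 (pr (enc f) ((fix encs l := match l with [] => 0 | g :: l => cns (enc g) (encs l) end) gs))
  | PPrim f g => pr 4 (pr (enc f) (enc g))
  | PMu f => pr 5 (enc f)
  end.
Definition encs gs := encl (map enc gs).
Lemma enc_comp f gs : enc (PComp f gs) = pr 3 (pr (enc f) (encs gs)).
Proof. simpl. f_equal. f_equal. unfold encs. induction gs; simpl; auto. Qed.

Lemma cns_inj x l x' l' : cns x l = cns x' l' -> x = x' /\ l = l'.
Proof. unfold cns. intros H. injection H. apply pr_inj. Qed.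

Lemma enc_inj : forall t t', enc t = enc t' -> t = t'.
Proof.
  fix IH 1. intros t t'. destruct t, t'; try rewrite !enc_comp; simpl; intros H;
  try (apply pr_inj in H; destruct H as [H1 H2]; try discriminate; subst; reflexivity).
  all: apply pr_inj in H; destruct H as [_ H].
  - apply pr_inj in H; destruct H as [H1 H2].
    apply IH in H1; subst. f_equal. revert l0 H2. induction l; destruct l0; simpl; intros H; try reflexivity; try discriminate.
    unfold encs in H. simpl in H. apply cns_inj in H. destruct H as [Ha Hb]. apply IH in Ha. subst.
    f_equal. apply IHl. exact Hb.
  - apply pr_inj in H; destruct H as [H1 H2].
    apply IH in H1; apply IH in H2; subst; reflexivity.
  - apply IH in H; subst; reflexivity.
Qed.

Definition hdc l := sel l 0 (p1 (l - 1)).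
Definition tlc l := sel l 0 (p2 (l - 1)).
Definition nthc i l := hdc (nat_rect (fun _ => nat) l (fun _ r => tlc r) i).
Lemma hdc_cns x l : hdc (cns x l) = x.
Proof. unfold hdc, cns. simpl. rewrite Nat.sub_0_r. apply p1_pr. Qed.
Lemma tlc_cns x l : tlc (cns x l) = l.
Proof. unfold tlc, cns. simpl. rewrite Nat.sub_0_r. apply p2_pr. Qed.
Lemma iter_tlc0 i : nat_rect (fun _ => nat) 0 (fun _ r => tlc r) i = 0.
Proof. induction i; simpl; auto. rewrite IHi. reflexivity. Qed.
Lemma iter_tlc_cns i x l : nat_rect (fun _ => nat) (cns x l) (fun _ r => tlc r) (S i) =
   nat_rect (fun _ => nat) l (fun _ r => tlc r) i.
Proof. induction i; simpl in *; [apply tlc_cns|]. rewrite IHi. reflexivity. Qed.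
Lemma nthc_encl i v : nthc i (encl v) = nth i v 0.
Proof.
  unfold nthc. revert v; induction i; intros v.
  - destruct v; simpl; auto. apply hdc_cns.
  - destruct v; simpl encl.
    + rewrite iter_tlc0. reflexivity.
    + rewrite iter_tlc_cns. apply IHi.
Qed.

Definition ev t v K := pr 0 (pr t (pr v K)).
Definition rt y K := pr 1 (pr y K).
Definition evs gs v K := pr 2 (pr gs (pr v K)).
Definition fE1 gs v := pr 0 (pr gs v).
Definition fE2 y := pr 1 y.
Definition fC f := pr 2 f.
Definition fP g k N w := pr 3 (pr g (pr k (pr N w))).
Definition fM f m v := pr 4 (pr f (pr m v)).

Definition stepEval s t v K :=
  let tt := p1 t in let ta := p2 t in
  sel tt (rt 0 K)
  (sel (tt - 1) (rt (S (hdc v)) K)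
  (sel (tt - 2) (rt (nthc ta v) K)
  (sel (tt - 3) (evs (p2 ta) v (cns (fC (p1 ta)) K))
  (sel (tt - 4) (sel v s (ev (p1 ta) (tlc v) (cns (fP (p2 ta) 0 (hdc v) (tlc v)) K)))
  (sel (tt - 5) (ev ta (cns 0 v) (cns (fM ta 0 v) K))
  s))))).

Definition stepPrim y K' fa :=
  let g := p1 fa in let k := p1 (p2 fa) in let N := p1 (p2 (p2 fa)) in let w := p2 (p2 (p2 fa)) in
  sel ((k - N) + (N - k)) (rt y K') (ev g (cns k (cns y w)) (cns (fP g (S k) N w) K')).
Definition stepMu y K' fa :=
  let f := p1 fa in let m := p1 (p2 fa) in let v := p2 (p2 fa) in
  sel y (rt m K') (ev f (cns (S m) v) (cns (fM f (S m) v) K')).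

Definition stepRet s y K :=
  sel K s (
  let fr := hdc K in let K' := tlc K in let ft := p1 fr in let fa := p2 fr in
  sel ft (evs (p1 fa) (p2 fa) (cns (fE2 y) K'))
  (sel (ft - 1) (rt (cns fa y) K')
  (sel (ft - 2) (ev fa y K')
  (sel (ft - 3) (stepPrim y K' fa)
  (sel (ft - 4) (stepMu y K' fa)
  s))))).

Definition stepEvals (s : nat) gs v K := sel gs (rt 0 K) (ev (hdc gs) v (cns (fE1 (tlc gs) v) K)).

Definition stepf s :=
  let tag := p1 s in let p := p2 s in
  sel tag (stepEval s (p1 p) (p1 (p2 p)) (p2 (p2 p)))
  (sel (tag - 1) (stepRet s (p1 p) (p2 p))
  (sel (tag - 2) (stepEvals s (p1 p) (p1 (p2 p)) (p2 (p2 p))) s)).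

Definition finalb s := sel ((p1 s - 1) + (1 - p1 s)) (sel (p2 (p2 s)) 1 0) 0.

Lemma sel_cns x l a b : sel (cns x l) a b = b. Proof. reflexivity. Qed.
Ltac stp := unfold stepf, stepEval, stepRet, stepEvals, stepPrim, stepMu, ev, rt, evs, fE1, fE2, fC, fP, fM;
  repeat (rewrite ?p1_pr, ?p2_pr, ?hdc_cns, ?tlc_cns, ?sel_cns; cbn zeta); cbn [sel Nat.sub]; try reflexivity.

Lemma S_zero v K : stepf (ev (enc PZero) v K) = rt 0 K. Proof. simpl enc. stp. Qed.
Lemma S_succ v K : stepf (ev (enc PSucc) v K) = rt (S (hdc v)) K. Proof. simpl enc. stp. Qed.
Lemma S_proj i v K : stepf (ev (enc (PProj i)) v K) = rt (nthc i v) K. Proof. simpl enc. stp. Qed.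
Lemma S_comp f gs v K : stepf (ev (enc (PComp f gs)) v K) = evs (encs gs) v (cns (fC (enc f)) K).
Proof. rewrite enc_comp. stp. Qed.
Lemma S_prim_nil f g K : stepf (ev (enc (PPrim f g)) 0 K) = ev (enc (PPrim f g)) 0 K.
Proof. simpl enc. stp. Qed.
Lemma S_prim f g n w K : stepf (ev (enc (PPrim f g)) (cns n w) K) = ev (enc f) w (cns (fP (enc g) 0 n w) K).
Proof. simpl enc. stp. Qed.
Lemma S_mu f v K : stepf (ev (enc (PMu f)) v K) = ev (enc f) (cns 0 v) (cns (fM (enc f) 0 v) K).
Proof. simpl enc. stp. Qed.
Lemma S_evs_nil v K : stepf (evs 0 v K) = rt 0 K. Proof. stp. Qed.
Lemma S_evs_cons g gs v K : stepf (evs (cns g gs) v K) = ev g v (cns (fE1 gs v) K).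
Proof. stp. Qed.
Lemma S_E1 y gs v K : stepf (rt y (cns (fE1 gs v) K)) = evs gs v (cns (fE2 y) K).
Proof. stp. Qed.
Lemma S_E2 ys y K : stepf (rt ys (cns (fE2 y) K)) = rt (cns y ys) K.
Proof. stp. Qed.
Lemma S_C ys f K : stepf (rt ys (cns (fC f) K)) = ev f ys K.
Proof. stp. Qed.
Lemma S_P_eq r g N w K : stepf (rt r (cns (fP g N N w) K)) = rt r K.
Proof. stp. rewrite Nat.sub_diag. reflexivity. Qed.
Lemma S_P_lt r g k N w K : k <> N -> stepf (rt r (cns (fP g k N w) K)) = ev g (cns k (cns r w)) (cns (fP g (S k) N w) K).
Proof. intros H. stp. destruct (k - N + (N - k)) eqn:E; [lia|]. reflexivity. Qed.
Lemma S_M0 f m v K : stepf (rt 0 (cns (fM f m v) K)) = rt m K.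
Proof. stp. Qed.
Lemma S_MS y f m v K : stepf (rt (S y) (cns (fM f m v) K)) = ev f (cns (S m) v) (cns (fM f (S m) v) K).
Proof. stp. Qed.
Lemma S_final y : stepf (rt y 0) = rt y 0. Proof. stp. Qed.
Lemma F_rt0 y : finalb (rt y 0) = 1. Proof. unfold finalb. stp. Qed.
Lemma F_ev t v K : finalb (ev t v K) = 0. Proof. unfold finalb. stp. Qed.
Lemma F_evs t v K : finalb (evs t v K) = 0. Proof. unfold finalb. stp. Qed.
Lemma F_rtc y x K : finalb (rt y (cns x K)) = 0. Proof. unfold finalb. stp. Qed.

Definition iterf n s := nat_rect (fun _ => nat) s (fun _ r => stepf r) n.
Lemma iterf_S n s : iterf (S n) s = iterf n (stepf s).
Proof. revert s; induction n; intros s; simpl in *; auto. Qed.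
Lemma iterf_add a b s : iterf (a + b) s = iterf a (iterf b s).
Proof. induction a; simpl; auto. Qed.
Lemma iterf_comp a b s s1 s2 : iterf a s = s1 -> iterf b s1 = s2 -> iterf (b + a) s = s2.
Proof. intros; subst; apply iterf_add. Qed.
Lemma iterf_1 s : iterf 1 s = stepf s. Proof. reflexivity. Qed.

Lemma pr_surj z : pr (p1 z) (p2 z) = z.
Proof.
  unfold p1, p2. cbv zeta.
  pose proof (Nat.sqrt_spec z (Nat.le_0_l z)) as [H1 H2].
  remember (Nat.sqrt z) as s. remember (z - s * s) as r.
  destruct (S r - s) eqn:E; cbn [sel]; unfold pr.
  - rewrite E. cbn [sel]. lia.
  - destruct (S s - (r - s)) eqn:E2; cbn [sel]; nia.
Qed.

Lemma final_fix s : finalb s = 1 -> stepf s = s.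
Proof.
  intros H. unfold finalb in H.
  rewrite <- (pr_surj s) in *. rewrite <- (pr_surj (p2 s)) in *.
  rewrite ?p1_pr, ?p2_pr in H.
  destruct (p1 s - 1 + (1 - p1 s)) eqn:E; [|discriminate]. cbn [sel] in H.
  destruct (p2 (p2 s)) eqn:E2; [|discriminate].
  replace (p1 s) with 1 by lia. fold (rt (p1 (p2 s)) 0). apply S_final.
Qed.

Lemma final_mono n m s : finalb (iterf n s) = 1 -> n <= m -> finalb (iterf m s) = 1.
Proof.
  intros H Hl. replace m with ((m - n) + n) by lia. rewrite iterf_add.
  induction (m - n); simpl; auto. rewrite final_fix; auto.
Qed.

Definition reach s s' := exists j, iterf j s = s'.
Lemma reach_step s s1 s2 : stepf s = s1 -> reach s1 s2 -> reach s s2.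
Proof. intros H [j Hj]. exists (j + 1). eapply iterf_comp; eauto. Qed.
Lemma reach_trans s s1 s2 : reach s s1 -> reach s1 s2 -> reach s s2.
Proof. intros [a Ha] [b Hb]. exists (b + a). eapply iterf_comp; eauto. Qed.
Lemma reach_refl s : reach s s. Proof. exists 0; reflexivity. Qed.

Definition Pfwd t v y :=
  (forall K, reach (ev (enc t) (encl v) K) (rt y K)) /\
  match t, v with
  | PPrim f g, n :: w => forall N K, n <= N ->
      reach (ev (enc f) (encl w) (cns (fP (enc g) 0 N (encl w)) K)) (rt y (cns (fP (enc g) n N (encl w)) K))
  | _, _ => True
  end.

Lemma forward : forall t v y, eval t v y -> Pfwd t v y.
Proof.
  apply (eval_ind3 Pfwd (fun gs v ys => forall K, reach (evs (encs gs) (encl v) K) (rt (encl ys) K))); unfold Pfwd.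
  - split; auto. intros K. eapply reach_step; [apply S_zero|apply reach_refl].
  - split; auto. intros K. eapply reach_step; [apply S_succ|]. destruct v as [|x v]; [apply reach_refl | simpl encl; rewrite hdc_cns; apply reach_refl].
  - split; auto. intros K. eapply reach_step; [apply S_proj|]. rewrite nthc_encl. apply reach_refl.
  - intros f gs v ys y _ HQ _ [HP _]. split; auto. intros K.
    eapply reach_step; [apply S_comp|]. eapply reach_trans; [apply HQ|].
    eapply reach_step; [apply S_C|]. apply HP.
  - intros f g v y _ [HP _]. split.
    + intros K. eapply reach_step; [apply S_prim|]. eapply reach_trans; [apply HP|].
      eapply reach_step; [apply S_P_eq|apply reach_refl].
    + intros N K _. apply HP.
  - intros f g n v r y _ [_ HP1] _ [HP2 _]. simpl in HP1. split.
    + intros K. eapply reach_step; [apply S_prim|]. eapply reach_trans; [apply HP1; lia|].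
      eapply reach_step; [apply S_P_lt; lia|]. eapply reach_trans; [apply HP2|].
      eapply reach_step; [apply S_P_eq|apply reach_refl].
    + intros N K HN. eapply reach_trans; [apply HP1; lia|].
      eapply reach_step; [apply S_P_lt; lia|]. apply HP2.
  - intros f v n _ [HP0 _] Hlt. split; auto. intros K.
    eapply reach_step; [apply S_mu|].
    assert (forall m, m <= n -> reach (ev (enc f) (cns 0 (encl v)) (cns (fM (enc f) 0 (encl v)) K))
                                      (ev (enc f) (cns m (encl v)) (cns (fM (enc f) m (encl v)) K))) as Hl.
    { induction m; intros Hm; [apply reach_refl|].
      eapply reach_trans; [apply IHm; lia|].
      destruct (Hlt m) as [k [_ [Hk _]]]; [lia|].
      eapply reach_trans; [apply Hk|]. eapply reach_step; [apply S_MS|apply reach_refl]. }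
    eapply reach_trans; [apply Hl; auto|]. eapply reach_trans; [apply HP0|].
    eapply reach_step; [apply S_M0|apply reach_refl].
  - intros v K. eapply reach_step; [apply S_evs_nil|apply reach_refl].
  - intros g gs v y ys _ [HP _] _ HQ K.
    eapply reach_step; [apply S_evs_cons|]. eapply reach_trans; [apply HP|].
    eapply reach_step; [apply S_E1|]. eapply reach_trans; [apply HQ|].
    eapply reach_step; [apply S_E2|apply reach_refl].
Qed.

Definition fin n s := finalb (iterf n s) = 1.
Lemma fin_S n s : fin (S n) s -> fin n (stepf s).
Proof. unfold fin. rewrite iterf_S. auto. Qed.
Lemma fin_pos n s : finalb s = 0 -> fin n s -> exists n', n = S n'.
Proof. intros H1 H2. destruct n; [unfold fin in H2; simpl in H2; congruence|eauto]. Qed.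
Lemma fin_after j n s s' : iterf j s = s' -> j <= n -> fin n s -> fin (n - j) s'.
Proof. unfold fin. intros H1 H2 H3. subst. rewrite <- iterf_add. replace (n - j + j) with n by lia. auto. Qed.
Lemma stuck n s : stepf s = s -> finalb s = 0 -> ~ fin n s.
Proof.
  intros H1 H2 H3. unfold fin in H3. assert (iterf n s = s) as E.
  { clear H3. induction n; simpl; auto. rewrite IHn. auto. }
  rewrite E in H3. congruence.
Qed.
Lemma hdc_encl v : hdc (encl v) = hd 0 v.
Proof. destruct v; simpl; auto. apply hdc_cns. Qed.

Definition BW n :=
 (forall t v K, fin n (ev (enc t) (encl v) K) -> exists y j, j <= n /\ eval t v y /\ iterf j (ev (enc t) (encl v) K) = rt y K) /\
 (forall gs v K, fin n (evs (encs gs) (encl v) K) -> exists ys j, j <= n /\ evals gs v ys /\ iterf j (evs (encs gs) (encl v) K) = rt (encl ys) K) /\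
 (forall f g w k N r K, eval (PPrim f g) (k :: w) r -> k <= N -> fin n (rt r (cns (fP (enc g) k N (encl w)) K)) ->
     exists y j, j <= n /\ eval (PPrim f g) (N :: w) y /\ iterf j (rt r (cns (fP (enc g) k N (encl w)) K)) = rt y K) /\
 (forall f v m y0 K, eval f (m :: v) y0 -> (forall m', m' < m -> exists k, eval f (m' :: v) (S k)) ->
     fin n (rt y0 (cns (fM (enc f) m (encl v)) K)) ->
     exists y j, j <= n /\ eval (PMu f) v y /\ iterf j (rt y0 (cns (fM (enc f) m (encl v)) K)) = rt y K).

Lemma backward : forall n, BW n.
Proof.
  intros n; induction n as [n IH] using lt_wf_ind.
  split; [|split; [|split]].
  - intros t v K H. destruct t as [ | | i | f gs | f g | f].
    + destruct (fin_pos _ _ (F_ev _ _ _) H) as [n' ->].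
      exists 0, 1. split; [lia|]. split; [constructor|]. rewrite iterf_1. apply S_zero.
    + destruct (fin_pos _ _ (F_ev _ _ _) H) as [n' ->].
      exists (S (hd 0 v)), 1. split; [lia|]. split; [constructor|]. rewrite iterf_1, S_succ, hdc_encl. auto.
    + destruct (fin_pos _ _ (F_ev _ _ _) H) as [n' ->].
      exists (nth i v 0), 1. split; [lia|]. split; [constructor|]. rewrite iterf_1, S_proj, nthc_encl. auto.
    + destruct (fin_pos _ _ (F_ev _ _ _) H) as [n' ->].
      apply fin_S in H. rewrite S_comp in H.
      destruct (proj1 (proj2 (IH n' ltac:(lia))) _ _ _ H) as [ys [j1 [Hj1 [Hev1 Hit1]]]].
      pose proof (fin_after _ _ _ _ Hit1 Hj1 H) as H2.
      destruct (fin_pos _ _ (F_rtc _ _ _) H2) as [n'' E2]. rewrite E2 in H2.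
      apply fin_S in H2. rewrite S_C in H2.
      destruct (proj1 (IH n'' ltac:(lia)) _ _ _ H2) as [y [j2 [Hj2 [Hev2 Hit2]]]].
      exists y, (j2 + (1 + (j1 + 1))). split; [lia|]. split; [econstructor; eauto|].
      eapply iterf_comp; [|exact Hit2]. eapply iterf_comp; [|rewrite iterf_1; apply S_C].
      eapply iterf_comp; [|exact Hit1]. rewrite iterf_1; apply S_comp.
    + destruct v as [|k w].
      * exfalso. eapply stuck; [apply S_prim_nil|apply F_ev|exact H].
      * change (encl (k :: w)) with (cns k (encl w)) in *.
        destruct (fin_pos _ _ (F_ev _ _ _) H) as [n' ->].
        apply fin_S in H. rewrite S_prim in H.
        destruct (proj1 (IH n' ltac:(lia)) _ _ _ H) as [y0 [j1 [Hj1 [Hev1 Hit1]]]].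
        pose proof (fin_after _ _ _ _ Hit1 Hj1 H) as H2.
        destruct (proj1 (proj2 (proj2 (IH (n' - j1) ltac:(lia)))) f g w 0 k y0 K (ev_prim0 g Hev1) ltac:(lia) H2)
          as [y [j2 [Hj2 [Hev2 Hit2]]]].
        exists y, (j2 + (j1 + 1)). split; [lia|]. split; auto.
        eapply iterf_comp; [|exact Hit2]. eapply iterf_comp; [|exact Hit1]. rewrite iterf_1; apply S_prim.
    + destruct (fin_pos _ _ (F_ev _ _ _) H) as [n' ->].
      apply fin_S in H. rewrite S_mu in H.
      destruct (proj1 (IH n' ltac:(lia)) f (0 :: v) _ H) as [y0 [j1 [Hj1 [Hev1 Hit1]]]].
      pose proof (fin_after _ _ _ _ Hit1 Hj1 H) as H2.
      destruct (proj2 (proj2 (proj2 (IH (n' - j1) ltac:(lia)))) f v 0 y0 K Hev1 ltac:(intros; lia) H2)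
          as [y [j2 [Hj2 [Hev2 Hit2]]]].
      exists y, (j2 + (j1 + 1)). split; [lia|]. split; auto.
      eapply iterf_comp; [|exact Hit2]. eapply iterf_comp; [|exact Hit1]. rewrite iterf_1; apply S_mu.
  - intros gs v K H. destruct gs as [|g gs].
    + change (encs []) with 0 in *.
      destruct (fin_pos _ _ (F_evs _ _ _) H) as [n' ->].
      exists [], 1. split; [lia|]. split; [constructor|]. rewrite iterf_1. apply S_evs_nil.
    + change (encs (g :: gs)) with (cns (enc g) (encs gs)) in *.
      destruct (fin_pos _ _ (F_evs _ _ _) H) as [n' ->].
      apply fin_S in H. rewrite S_evs_cons in H.
      destruct (proj1 (IH n' ltac:(lia)) _ _ _ H) as [y [j1 [Hj1 [Hev1 Hit1]]]].
      pose proof (fin_after _ _ _ _ Hit1 Hj1 H) as H2.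
      destruct (fin_pos _ _ (F_rtc _ _ _) H2) as [n'' E2]. rewrite E2 in H2.
      apply fin_S in H2. rewrite S_E1 in H2.
      destruct (proj1 (proj2 (IH n'' ltac:(lia))) _ _ _ H2) as [ys [j2 [Hj2 [Hev2 Hit2]]]].
      pose proof (fin_after _ _ _ _ Hit2 Hj2 H2) as H3.
      destruct (fin_pos _ _ (F_rtc _ _ _) H3) as [n3 E3].
      exists (y :: ys), (1 + (j2 + (1 + (j1 + 1)))). split; [lia|]. split; [constructor; auto|].
      eapply iterf_comp; [|rewrite iterf_1; apply S_E2].
      eapply iterf_comp; [|exact Hit2]. eapply iterf_comp; [|rewrite iterf_1; apply S_E1].
      eapply iterf_comp; [|exact Hit1]. rewrite iterf_1; apply S_evs_cons.
  - intros f g w k N r K Hev Hk H. destruct (Nat.eq_dec k N) as [<-|Hne].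
    + destruct (fin_pos _ _ (F_rtc _ _ _) H) as [n' ->].
      exists r, 1. split; [lia|]. split; auto. rewrite iterf_1. apply S_P_eq.
    + destruct (fin_pos _ _ (F_rtc _ _ _) H) as [n' ->].
      apply fin_S in H. rewrite S_P_lt in H by auto.
      destruct (proj1 (IH n' ltac:(lia)) g (k :: r :: w) _ H) as [y1 [j1 [Hj1 [Hev1 Hit1]]]].
      pose proof (fin_after _ _ _ _ Hit1 Hj1 H) as H2.
      destruct (proj1 (proj2 (proj2 (IH (n' - j1) ltac:(lia)))) f g w (S k) N y1 K (ev_primS Hev Hev1) ltac:(lia) H2)
          as [y [j2 [Hj2 [Hev2 Hit2]]]].
      exists y, (j2 + (j1 + 1)). split; [lia|]. split; auto.
      eapply iterf_comp; [|exact Hit2]. eapply iterf_comp; [|exact Hit1]. rewrite iterf_1; apply S_P_lt; auto.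
  - intros f v m y0 K Hev Hlt H. destruct y0 as [|y0'].
    + destruct (fin_pos _ _ (F_rtc _ _ _) H) as [n' ->].
      exists m, 1. split; [lia|]. split; [constructor; auto|]. rewrite iterf_1. apply S_M0.
    + destruct (fin_pos _ _ (F_rtc _ _ _) H) as [n' ->].
      apply fin_S in H. rewrite S_MS in H.
      destruct (proj1 (IH n' ltac:(lia)) f (S m :: v) _ H) as [y1 [j1 [Hj1 [Hev1 Hit1]]]].
      pose proof (fin_after _ _ _ _ Hit1 Hj1 H) as H2.
      assert (forall m', m' < S m -> exists k, eval f (m' :: v) (S k)) as Hlt'.
      { intros m' Hm'. destruct (Nat.eq_dec m' m) as [->|]; [eauto|]. apply Hlt. lia. }
      destruct (proj2 (proj2 (proj2 (IH (n' - j1) ltac:(lia)))) f v (S m) y1 K Hev1 Hlt' H2)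
          as [y [j2 [Hj2 [Hev2 Hit2]]]].
      exists y, (j2 + (j1 + 1)). split; [lia|]. split; auto.
      eapply iterf_comp; [|exact Hit2]. eapply iterf_comp; [|exact Hit1]. rewrite iterf_1; apply S_MS.
Qed.

Theorem machine_correct t v :
  (exists y, eval t v y) <-> exists n, finalb (iterf n (ev (enc t) (encl v) 0)) = 1.
Proof.
  split.
  - intros [y Hy]. destruct (proj1 (forward _ _ _ Hy) 0) as [j Hj]. exists j. rewrite Hj. apply F_rt0.
  - intros [n Hn]. destruct (proj1 (backward n) t v 0 Hn) as [y [_ [_ [Hy _]]]]. eauto.
Qed.

Notation V0 := (EVar 0). Notation V1 := (EVar 1). Notation V2 := (EVar 2). Notation V3 := (EVar 3).
Notation one := (ESucc EZero).
Fixpoint enum n := match n with 0 => EZero | S n => ESucc (enum n) end.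
Lemma den_enum n v : den (enum n) v = n. Proof. induction n; simpl; auto. Qed.

Definition eSqrt := ERec EZero (EAdd V1 (ESel (ESub (EMul (ESucc V1) (ESucc V1)) V2) one EZero)) V0 V0.
Lemma den_eSqrt z : den eSqrt [z] = Nat.sqrt z.
Proof.
  unfold eSqrt. cbn [den nth]. assert (forall k, nat_rect (fun _ => nat) 0 (fun _ r => r + sel (S r * S r - z) 1 0) k = Nat.min k (Nat.sqrt z)) as H.
  { pose proof (Nat.sqrt_spec z (Nat.le_0_l z)) as [H1 H2]. set (s := Nat.sqrt z) in *.
    induction k; cbn [nat_rect]; auto. rewrite IHk.
    destruct (S (Nat.min k s) * S (Nat.min k s) - z) eqn:E; simpl sel.
    - assert (Nat.min k s < s) by nia. lia.
    - assert (s <= k) by nia. lia. }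
  rewrite H. pose proof (Nat.sqrt_le_lin z). lia.
Qed.

Definition ePr := ESel (ESub (ESucc V0) V1) (EAdd (EMul V1 V1) V0) (EAdd (EAdd (EMul V0 V0) V0) V1).
Definition mPr a b := ECall2 ePr a b.
Lemma den_mPr a b v : den (mPr a b) v = pr (den a v) (den b v). Proof. reflexivity. Qed.
Definition eP1 := ECall2 (ESel (ESub (ESucc (ESub V0 (EMul V1 V1))) V1) (ESub V0 (EMul V1 V1)) V1) V0 (ECall1 eSqrt V0).
Definition eP2 := ECall2 (ESel (ESub (ESucc (ESub V0 (EMul V1 V1))) V1) V1 (ESub (ESub V0 (EMul V1 V1)) V1)) V0 (ECall1 eSqrt V0).
Definition mP1 a := ECall1 eP1 a.
Definition mP2 a := ECall1 eP2 a.
Lemma den_mP1 a v : den (mP1 a) v = p1 (den a v).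
Proof. unfold mP1, eP1. cbn [den nth]. rewrite den_eSqrt. reflexivity. Qed.
Lemma den_mP2 a v : den (mP2 a) v = p2 (den a v).
Proof. unfold mP2, eP2. cbn [den nth]. rewrite den_eSqrt. reflexivity. Qed.
Definition mHd a := ECall1 (ESel V0 EZero (mP1 (ESub V0 one))) a.
Definition mTl a := ECall1 (ESel V0 EZero (mP2 (ESub V0 one))) a.
Lemma den_mHd a v : den (mHd a) v = hdc (den a v).
Proof. unfold mHd. cbn [den nth]. rewrite den_mP1. reflexivity. Qed.
Lemma den_mTl a v : den (mTl a) v = tlc (den a v).
Proof. unfold mTl. cbn [den nth]. rewrite den_mP2. reflexivity. Qed.
Definition mCns a b := ESucc (mPr a b).
Lemma den_mCns a b v : den (mCns a b) v = cns (den a v) (den b v). Proof. reflexivity. Qed.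
Definition mNth i l := mHd (ERec V0 (mTl V1) i l).
Lemma den_mNth i l v : den (mNth i l) v = nthc (den i v) (den l v).
Proof.
  unfold mNth. rewrite den_mHd. unfold nthc. f_equal. cbn [den nth].
  induction (den i v); cbn [nat_rect]; auto. rewrite IHn, den_mTl. reflexivity.
Qed.
Definition mEq x y a b := ESel (EAdd (ESub x y) (ESub y x)) a b.

Global Opaque mPr mP1 mP2 mHd mTl mCns mNth.
Hint Rewrite den_mPr den_mP1 den_mP2 den_mHd den_mTl den_mCns den_mNth den_enum : dn.
Ltac dsimp := repeat (progress (cbn [den nth]; autorewrite with dn)).

Definition mEv t v K := mPr (enum 0) (mPr t (mPr v K)).
Definition mRt y K := mPr (enum 1) (mPr y K).
Definition mEvs gs v K := mPr (enum 2) (mPr gs (mPr v K)).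
Definition mfE1 gs v := mPr (enum 0) (mPr gs v).
Definition mfE2 y := mPr (enum 1) y.
Definition mfC f := mPr (enum 2) f.
Definition mfP g k N w := mPr (enum 3) (mPr g (mPr k (mPr N w))).
Definition mfM f m v := mPr (enum 4) (mPr f (mPr m v)).

Definition eStepEval s t v K :=
  let tt := mP1 t in let ta := mP2 t in
  ESel tt (mRt EZero K)
  (ESel (ESub tt (enum 1)) (mRt (ESucc (mHd v)) K)
  (ESel (ESub tt (enum 2)) (mRt (mNth ta v) K)
  (ESel (ESub tt (enum 3)) (mEvs (mP2 ta) v (mCns (mfC (mP1 ta)) K))
  (ESel (ESub tt (enum 4)) (ESel v s (mEv (mP1 ta) (mTl v) (mCns (mfP (mP2 ta) EZero (mHd v) (mTl v)) K)))
  (ESel (ESub tt (enum 5)) (mEv ta (mCns EZero v) (mCns (mfM ta EZero v) K))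
  s))))).
Lemma den_eStepEval s t v K e : den (eStepEval s t v K) e = stepEval (den s e) (den t e) (den v e) (den K e).
Proof. unfold eStepEval, mRt, mEv, mEvs, mfC, mfP, mfM. dsimp. unfold stepf, stepEval, stepRet, stepEvals, stepPrim, stepMu, ev, rt, evs, fE1, fE2, fC, fP, fM, finalb; cbv zeta; reflexivity. Qed.

Definition eStepPrim y K' fa :=
  let g := mP1 fa in let k := mP1 (mP2 fa) in let N := mP1 (mP2 (mP2 fa)) in let w := mP2 (mP2 (mP2 fa)) in
  ESel (EAdd (ESub k N) (ESub N k)) (mRt y K') (mEv g (mCns k (mCns y w)) (mCns (mfP g (ESucc k) N w) K')).
Lemma den_eStepPrim y K fa e : den (eStepPrim y K fa) e = stepPrim (den y e) (den K e) (den fa e).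
Proof. unfold eStepPrim, mRt, mEv, mfP. dsimp. unfold stepf, stepEval, stepRet, stepEvals, stepPrim, stepMu, ev, rt, evs, fE1, fE2, fC, fP, fM, finalb; cbv zeta; reflexivity. Qed.
Definition eStepMu y K' fa :=
  let f := mP1 fa in let m := mP1 (mP2 fa) in let v := mP2 (mP2 fa) in
  ESel y (mRt m K') (mEv f (mCns (ESucc m) v) (mCns (mfM f (ESucc m) v) K')).
Lemma den_eStepMu y K fa e : den (eStepMu y K fa) e = stepMu (den y e) (den K e) (den fa e).
Proof. unfold eStepMu, mRt, mEv, mfM. dsimp. unfold stepf, stepEval, stepRet, stepEvals, stepPrim, stepMu, ev, rt, evs, fE1, fE2, fC, fP, fM, finalb; cbv zeta; reflexivity. Qed.
Global Opaque eStepPrim eStepMu eStepEval.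
Hint Rewrite den_eStepPrim den_eStepMu den_eStepEval : dn.

Definition eStepRet s y K :=
  ESel K s (
  let fr := mHd K in let K' := mTl K in let ft := mP1 fr in let fa := mP2 fr in
  ESel ft (mEvs (mP1 fa) (mP2 fa) (mCns (mfE2 y) K'))
  (ESel (ESub ft (enum 1)) (mRt (mCns fa y) K')
  (ESel (ESub ft (enum 2)) (mEv fa y K')
  (ESel (ESub ft (enum 3)) (eStepPrim y K' fa)
  (ESel (ESub ft (enum 4)) (eStepMu y K' fa)
  s))))).
Lemma den_eStepRet s y K e : den (eStepRet s y K) e = stepRet (den s e) (den y e) (den K e).
Proof. unfold eStepRet, mRt, mEv, mEvs, mfE2. dsimp. unfold stepf, stepEval, stepRet, stepEvals, stepPrim, stepMu, ev, rt, evs, fE1, fE2, fC, fP, fM, finalb; cbv zeta; reflexivity. Qed.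
Definition eStepEvals (s : exp) gs v K := ESel gs (mRt EZero K) (mEv (mHd gs) v (mCns (mfE1 (mTl gs) v) K)).
Lemma den_eStepEvals s gs v K e : den (eStepEvals s gs v K) e = stepEvals (den s e) (den gs e) (den v e) (den K e).
Proof. unfold eStepEvals, mRt, mEv, mfE1. dsimp. unfold stepf, stepEval, stepRet, stepEvals, stepPrim, stepMu, ev, rt, evs, fE1, fE2, fC, fP, fM, finalb; cbv zeta; reflexivity. Qed.
Global Opaque eStepRet eStepEvals.
Hint Rewrite den_eStepRet den_eStepEvals : dn.

Definition eStepBody :=
  let s := V0 in let tag := mP1 V0 in let p := mP2 V0 in
  ESel tag (eStepEval s (mP1 p) (mP1 (mP2 p)) (mP2 (mP2 p)))
  (ESel (ESub tag (enum 1)) (eStepRet s (mP1 p) (mP2 p))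
  (ESel (ESub tag (enum 2)) (eStepEvals s (mP1 p) (mP1 (mP2 p)) (mP2 (mP2 p))) s)).
Definition mStep a := ECall1 eStepBody a.
Lemma den_mStep a e : den (mStep a) e = stepf (den a e).
Proof. unfold mStep, eStepBody. dsimp. unfold stepf, stepEval, stepRet, stepEvals, stepPrim, stepMu, ev, rt, evs, fE1, fE2, fC, fP, fM, finalb; cbv zeta; reflexivity. Qed.

Definition eFinal := ESel (EAdd (ESub (mP1 V0) (enum 1)) (ESub (enum 1) (mP1 V0))) (ESel (mP2 (mP2 V0)) (enum 1) EZero) EZero.
Definition mFinal a := ECall1 eFinal a.
Lemma den_mFinal a e : den (mFinal a) e = finalb (den a e).
Proof. unfold mFinal, eFinal. dsimp. unfold stepf, stepEval, stepRet, stepEvals, stepPrim, stepMu, ev, rt, evs, fE1, fE2, fC, fP, fM, finalb; cbv zeta; reflexivity. Qed.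

Definition mIter n a := ERec V0 (mStep V1) n a.
Lemma den_mIter n a e : den (mIter n a) e = iterf (den n e) (den a e).
Proof.
  unfold mIter, iterf. cbn [den nth].
  induction (den n e); cbn [nat_rect]; auto. rewrite IHn0, den_mStep. reflexivity.
Qed.
Global Opaque mStep mFinal mIter.
Hint Rewrite den_mStep den_mFinal den_mIter : dn.

Definition sylv k := nat_rect (fun _ => nat) 2 (fun _ r => r * (r - 1) + 1) k.
Lemma sylv_ge2 k : 2 <= sylv k.
Proof. induction k; simpl; auto. fold (sylv k). nia. Qed.
Lemma sylv_S k : sylv (S k) = sylv k * (sylv k - 1) + 1. Proof. reflexivity. Qed.
Lemma sylv_dvd j k : j < k -> Nat.divide (sylv j) (sylv k - 1).
Proof.
  induction k; intros H; [lia|]. rewrite sylv_S. replace (sylv k * (sylv k - 1) + 1 - 1) with (sylv k * (sylv k - 1)) by lia.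
  destruct (Nat.eq_dec j k) as [->|]. - apply Nat.divide_factor_l.
  - apply Nat.divide_mul_r. apply IHk. lia.
Qed.
Lemma sylv_coprime j k : j <> k -> Nat.gcd (sylv j) (sylv k) = 1.
Proof.
  intros H. assert (forall a b, a < b -> Nat.gcd (sylv a) (sylv b) = 1) as Hl.
  { intros a b Hab. apply Nat.divide_1_r.
    pose proof (sylv_ge2 b).
    replace 1 with (sylv b - (sylv b - 1)) by lia.
    apply Nat.divide_sub_r. apply Nat.gcd_divide_r.
    eapply Nat.divide_trans; [apply Nat.gcd_divide_l|]. apply sylv_dvd; auto. }
  destruct (Nat.lt_total j k) as [|[|]]; [apply Hl; auto|lia|].
  rewrite Nat.gcd_comm. apply Hl. lia.
Qed.

Definition prodf (g : nat -> nat) n := nat_rect (fun _ => nat) 1 (fun k r => r * g k) n.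
Lemma mul_dvd a b c d : Nat.divide a b -> Nat.divide c d -> Nat.divide (a * c) (b * d).
Proof. intros [x ->] [y ->]. exists (x * y). lia. Qed.
Lemma prodf_dvd g h n : (forall k, k < n -> Nat.divide (g k) (h k)) -> Nat.divide (prodf g n) (prodf h n).
Proof.
  induction n; intros H; simpl. - apply Nat.divide_refl.
  - apply mul_dvd; auto.
Qed.
Lemma prodf_S g n : prodf g (S n) = prodf g n * g n. Proof. reflexivity. Qed.
Lemma prodf_pos g n : (forall k, k < n -> 1 <= g k) -> 1 <= prodf g n.
Proof. induction n; intros H; simpl; auto. fold (prodf g n). pose proof (IHn ltac:(intros; apply H; lia)). specialize (H n ltac:(lia)). nia. Qed.
Lemma prodf_coprime a g n : 2 <= a -> (forall k, k < n -> Nat.gcd a (g k) = 1) -> ~ Nat.divide a (prodf g n).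
Proof.
  intros Ha. induction n; intros H Hd; simpl in Hd.
  - apply Nat.divide_1_r in Hd. lia.
  - fold (prodf g n) in Hd. rewrite Nat.mul_comm in Hd. apply Nat.gauss in Hd; [|apply H; lia].
    apply IHn; auto.
Qed.
Lemma dvd_prodf g n k : k < n -> Nat.divide (g k) (prodf g n).
Proof.
  induction n; intros H; [lia|]. rewrite prodf_S. destruct (Nat.eq_dec k n) as [->|].
  - apply Nat.divide_factor_r.
  - apply Nat.divide_mul_l. apply IHn. lia.
Qed.

Lemma gcd1r a : Nat.gcd a 1 = 1.
Proof. apply Nat.divide_1_r. apply Nat.gcd_divide_r. Qed.
Section QB.
Variable b : nat -> nat -> bool.
Hypothesis bmono : forall k t t', b k t = true -> t <= t' -> b k t' = true.
Definition fct k t := if b k t then sylv k else 1.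
Definition Qb t := prodf (fun k => fct k t) t.
Lemma Qb_pos t : 1 <= Qb t.
Proof. apply prodf_pos. intros k _. unfold fct. destruct (b k t); [pose proof (sylv_ge2 k)|]; lia. Qed.
Lemma Qb_mono t t' : t <= t' -> Nat.divide (Qb t) (Qb t').
Proof.
  intros H. induction H. - apply Nat.divide_refl.
  - eapply Nat.divide_trans; [exact IHle|]. unfold Qb. rewrite prodf_S. apply Nat.divide_mul_l.
    apply prodf_dvd. intros k _. unfold fct. destruct (b k m) eqn:E.
    + rewrite (bmono k m (S m)); auto. apply Nat.divide_refl.
    + apply Nat.divide_1_l.
Qed.
Lemma sylv_Qb k : (exists t, Nat.divide (sylv k) (Qb t)) <-> exists t, b k t = true.
Proof.
  split.
  - intros [t Ht]. destruct (b k t) eqn:E; eauto.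
    exfalso. revert Ht. apply prodf_coprime; [apply sylv_ge2|]. intros j _. unfold fct.
    destruct (Nat.eq_dec j k) as [->|]. + rewrite E. apply gcd1r.
    + destruct (b j t); [apply sylv_coprime; auto|apply gcd1r].
  - intros [t Ht]. exists (Nat.max t (S k)). unfold Qb.
    replace (sylv k) with (fct k (Nat.max t (S k))).
    + apply (dvd_prodf (fun j => fct j (Nat.max t (S k)))). lia.
    + unfold fct. rewrite (bmono k t); auto. lia.
Qed.
End QB.

Open Scope Qc_scope.
Definition zq (z : Z) : Qc := Q2Qc (inject_Z z).
Lemma zq_add a b : zq (a + b) = zq a + zq b.
Proof. unfold zq, Qcplus. apply Q2Qc_eq_iff. cbn [this Q2Qc]. rewrite ?Qred_correct. rewrite inject_Z_plus. reflexivity. Qed.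
Lemma zq_mul a b : zq (a * b) = zq a * zq b.
Proof. unfold zq, Qcmult. apply Q2Qc_eq_iff. cbn [this Q2Qc]. rewrite ?Qred_correct. rewrite inject_Z_mult. reflexivity. Qed.
Lemma zq_opp a : zq (- a) = - zq a.
Proof. unfold zq, Qcopp. apply Q2Qc_eq_iff. cbn [this Q2Qc]. rewrite ?Qred_correct. rewrite inject_Z_opp. reflexivity. Qed.
Lemma zq_inj a b : zq a = zq b -> a = b.
Proof. intros H. apply Q2Qc_eq_iff in H. unfold Qeq in H; simpl in H; lia. Qed.
Lemma zq0 : zq 0 = 0. Proof. reflexivity. Qed.
Lemma zq1 : zq 1 = 1. Proof. reflexivity. Qed.
Lemma zq_sub a b : zq (a - b) = zq a - zq b.
Proof. unfold Z.sub, Qcminus. rewrite zq_add, zq_opp. reflexivity. Qed.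
Close Scope Qc_scope.

Definition nq (k : nat) : Qc := zq (Z.of_nat k).

Record W := mkW { wa : Z; wf : Z -> Z; wh : Z -> Z -> Qc }.
Definition wmul (x y : W) : W :=
  mkW (wa x + wa y)%Z (fun i => wf y i + wf x (i + wa y))%Z
      (fun i j => wh y i j + wh x (i + wa y)%Z (j + wf y i)%Z)%Qc.
Definition wone : W := mkW 0%Z (fun _ => 0%Z) (fun _ _ => 0%Qc).
Definition winv (x : W) : W :=
  mkW (- wa x)%Z (fun i => - wf x (i - wa x))%Z
      (fun i j => - wh x (i - wa x)%Z (j - wf x (i - wa x))%Z)%Qc.

Lemma W_ext x y : wa x = wa y -> (forall i, wf x i = wf y i) -> (forall i j, wh x i j = wh y i j) -> x = y.
Proof.
  destruct x, y; simpl; intros -> Hf Hh.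
  apply functional_extensionality in Hf. subst.
  assert (wh0 = wh1) as -> by (apply functional_extensionality; intros i; apply functional_extensionality; auto).
  reflexivity.
Qed.

Lemma wmulA x y z : wmul x (wmul y z) = wmul (wmul x y) z.
Proof.
  apply W_ext; simpl; intros; [lia| |].
  - replace (i + wa z + wa y)%Z with (i + (wa y + wa z))%Z by lia; lia.
  - rewrite Qcplus_assoc. f_equal. f_equal; lia.
Qed.
Lemma wmul1l x : wmul wone x = x.
Proof. apply W_ext; simpl; intros; [lia|lia|]. rewrite Qcplus_0_r. reflexivity. Qed.
Lemma wmul1r x : wmul x wone = x.
Proof. apply W_ext; simpl; intros; rewrite ?Z.add_0_r; auto. rewrite Qcplus_0_l. reflexivity. Qed.
Lemma wmulVl x : wmul (winv x) x = wone.
Proof.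
  apply W_ext; simpl; intros; [lia| |].
  - replace (i + wa x - wa x)%Z with i by lia. lia.
  - replace (i + wa x - wa x)%Z with i by lia. replace (j + wf x i - wf x i)%Z with j by lia.
    apply Qcplus_opp_r.
Qed.
Lemma wmulVr x : wmul x (winv x) = wone.
Proof.
  apply W_ext; simpl; intros; [lia| |].
  - replace (i + - wa x)%Z with (i - wa x)%Z by lia. lia.
  - replace (i + - wa x)%Z with (i - wa x)%Z by lia. replace (j + - wf x (i - wa x))%Z with (j - wf x (i - wa x))%Z by lia.
    rewrite Qcplus_comm. apply Qcplus_opp_r.
Qed.

Definition Wg : group := @Group W wmul wone winv wmulA wmul1l wmul1r wmulVl wmulVr.

Section Sub.
Variable G : group.
Variable S : list G.
Lemma in_gen_mul x y : in_gen S x -> in_gen S y -> in_gen S (gmul G x y).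
Proof.
  induction 1; intros Hy.
  - rewrite gmul1l. auto.
  - rewrite <- gmulA. constructor; auto.
  - rewrite <- gmulA. apply gen_mulV; auto.
Qed.
Lemma in_gen_gen s : In s S -> in_gen S s.
Proof. intros H. rewrite <- (gmul1r G s). constructor; auto. constructor. Qed.
Lemma in_gen_genV s : In s S -> in_gen S (ginv G s).
Proof. intros H. rewrite <- (gmul1r G (ginv G s)). apply gen_mulV; auto. constructor. Qed.
Lemma inv_mul x y : ginv G (gmul G x y) = gmul G (ginv G y) (ginv G x).
Proof.
  assert (forall a b, gmul G a b = gone G -> b = ginv G a) as Hu.
  { intros a b H. rewrite <- (gmul1l G b), <- (gmulVl G a), <- gmulA, H, gmul1r. auto. }
  symmetry. apply Hu. rewrite gmulA, <- (gmulA G x y), gmulVr, gmul1r, gmulVr. auto.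
Qed.
Lemma inv_inv x : ginv G (ginv G x) = x.
Proof.
  rewrite <- (gmul1r G (ginv G (ginv G x))), <- (gmulVl G x), gmulA, gmulVl, gmul1l. auto.
Qed.
Lemma in_gen_inv x : in_gen S x -> in_gen S (ginv G x).
Proof.
  induction 1.
  - replace (ginv G (gone G)) with (gone G); [constructor|]. rewrite <- (gmul1r G (ginv G (gone G))). rewrite gmulVl. auto.
  - rewrite inv_mul. apply in_gen_mul; auto. apply in_gen_genV; auto.
  - rewrite inv_mul, inv_inv. apply in_gen_mul; auto. apply in_gen_gen; auto.
Qed.

Definition subc := { x : G | in_gen S x }.
Definition smul (x y : subc) : subc := exist _ (gmul G (proj1_sig x) (proj1_sig y)) (in_gen_mul _ _ (proj2_sig x) (proj2_sig y)).
Definition sone : subc := exist _ (gone G) (gen_one G S).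
Definition sinv (x : subc) : subc := exist _ (ginv G (proj1_sig x)) (in_gen_inv _ (proj2_sig x)).
Lemma sub_ext (x y : subc) : proj1_sig x = proj1_sig y -> x = y.
Proof. destruct x, y; simpl; intros; subst. f_equal. apply proof_irrelevance. Qed.
Lemma smulA x y z : smul x (smul y z) = smul (smul x y) z.
Proof. apply sub_ext; simpl. apply gmulA. Qed.
Lemma smul1l x : smul sone x = x. Proof. apply sub_ext; simpl. apply gmul1l. Qed.
Lemma smul1r x : smul x sone = x. Proof. apply sub_ext; simpl. apply gmul1r. Qed.
Lemma smulVl x : smul (sinv x) x = sone. Proof. apply sub_ext; simpl. apply gmulVl. Qed.
Lemma smulVr x : smul x (sinv x) = sone. Proof. apply sub_ext; simpl. apply gmulVr. Qed.
Definition Subg : group := @Group subc smul sone sinv smulA smul1l smul1r smulVl smulVr.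

Lemma sub_gpow (g : Subg) k : proj1_sig (gpow g k) = gpow (proj1_sig g) k.
Proof. induction k; simpl; auto. rewrite IHk. auto. Qed.

Definition lift (s : G) (H : in_gen S s) : Subg := exist _ s H.
End Sub.

Open Scope nat_scope.

Lemma nq_mul a b : nq (a * b) = (nq a * nq b)%Qc.
Proof. unfold nq. rewrite Nat2Z.inj_mul. apply zq_mul. Qed.
Lemma nq_add a b : nq (a + b) = (nq a + nq b)%Qc.
Proof. unfold nq. rewrite Nat2Z.inj_add. apply zq_add. Qed.
Lemma zq_nz z : z <> 0%Z -> zq z <> 0%Qc.
Proof. intros H E. apply H. apply zq_inj. rewrite E. reflexivity. Qed.
Lemma nq_S (k : nat) : nq (S k) = (1 + nq k)%Qc.
Proof. replace (S k) with (1 + k)%nat by lia. rewrite nq_add. reflexivity. Qed.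
Lemma nq_cancel n a b : 1 <= n -> (nq n * a = nq n * b)%Qc -> a = b.
Proof.
  intros Hn H. assert (nq n <> 0%Qc) as Hz by (apply zq_nz; lia).
  assert (a = / nq n * (nq n * a))%Qc as -> by (field; auto).
  rewrite H. field; auto.
Qed.

Section Construction.
Variable Qf : nat -> nat.
Hypothesis Qf_pos : forall t, 1 <= Qf t.
Hypothesis Qf_mono : forall t t', t <= t' -> Nat.divide (Qf t) (Qf t').
Definition X n := exists t, Nat.divide n (Qf t).

Definition Xd (i : Z) : bool := if excluded_middle_informative ((1 <= i)%Z /\ X (Z.to_nat i)) then true else false.
Definition rr (i : Z) : Qc := if Xd i then (/ zq i)%Qc else 0%Qc.
Definition dl (d : Z) : Z -> Z := fun i => if Z.eq_dec i d then 1%Z else 0%Z.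
Definition ga := mkW 1 (fun _ => 0%Z) (fun _ _ => 0%Qc).
Definition gb := mkW 0 (dl 0) (fun _ _ => 0%Qc).
Definition gc := mkW 0 (fun _ => 0%Z) (fun i j => (rr i * zq j)%Qc).
Definition E q := mkW 0 (fun _ => 0%Z) (fun i j => if Z.eq_dec i 0 then q else 0%Qc).
Definition gens : list Wg := [ga; gb; gc].

Definition Rs q := exists t m, (nq (Qf t) * q)%Qc = zq m.
Lemma Rs0 : Rs 0%Qc. Proof. exists 0, 0%Z. apply Qcmult_0_r. Qed.
Lemma Rs_opp q : Rs q -> Rs (- q)%Qc.
Proof. intros [t [m H]]. exists t, (- m)%Z. rewrite zq_opp, <- H. ring. Qed.
Lemma Rs_add q1 q2 : Rs q1 -> Rs q2 -> Rs (q1 + q2)%Qc.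
Proof.
  intros [t1 [m1 H1]] [t2 [m2 H2]].
  destruct (Qf_mono t1 (Nat.max t1 t2) ltac:(lia)) as [c1 E1].
  destruct (Qf_mono t2 (Nat.max t1 t2) ltac:(lia)) as [c2 E2].
  exists (Nat.max t1 t2), (Z.of_nat c1 * m1 + Z.of_nat c2 * m2)%Z.
  rewrite zq_add, !zq_mul. fold (nq c1) (nq c2). rewrite <- H1, <- H2.
  replace (nq (Qf (Nat.max t1 t2)) * (q1 + q2))%Qc with
      (nq (Qf (Nat.max t1 t2)) * q1 + nq (Qf (Nat.max t1 t2)) * q2)%Qc by ring.
  rewrite E1 at 1. rewrite E2. rewrite !nq_mul. ring.
Qed.
Lemma Rs_rr i j : Rs (rr i * zq j)%Qc.
Proof.
  unfold rr, Xd. destruct (excluded_middle_informative _) as [[Hi [t [c Hc]]]|_].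
  - exists t, (Z.of_nat c * j)%Z. unfold nq. rewrite Hc, Nat2Z.inj_mul, Z2Nat.id by lia.
    rewrite !zq_mul. field. apply zq_nz. lia.
  - rewrite Qcmult_0_l. apply Rs0.
Qed.

Definition Inv (w : W) := forall i j, Rs (wh w i j).
Lemma Inv_gen w : in_gen (G:=Wg) gens w -> Inv w.
Proof.
  induction 1; intros i j.
  - apply Rs0.
  - simpl. apply Rs_add; auto. destruct H as [<-|[<-|[<-|[]]]]; simpl; try apply Rs0. apply Rs_rr.
  - simpl. apply Rs_add; auto. destruct H as [<-|[<-|[<-|[]]]]; simpl; try (apply Rs_opp; apply Rs0).
    apply Rs_opp, Rs_rr.
Qed.

Lemma gpow_S (w : Wg) k : gpow w (S k) = wmul w (gpow w k). Proof. reflexivity. Qed.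
Lemma gpow_wa (w : Wg) k : wa (gpow w k) = (Z.of_nat k * wa w)%Z.
Proof. induction k; [reflexivity|]. rewrite gpow_S. cbn [wa wmul]. rewrite IHk. lia. Qed.
Lemma gpow_wf (w : Wg) k : wa w = 0%Z -> forall i, wf (gpow w k) i = (Z.of_nat k * wf w i)%Z.
Proof.
  intros Ha. induction k; intros i; [reflexivity|]. rewrite gpow_S. cbn [wf wmul]. rewrite IHk, gpow_wa, Ha.
  replace (i + Z.of_nat k * 0)%Z with i by lia. lia.
Qed.
Lemma gpow_wh (w : Wg) k : wa w = 0%Z -> (forall i, wf w i = 0%Z) -> forall i j, wh (gpow w k) i j = (nq k * wh w i j)%Qc.
Proof.
  intros Ha Hf. induction k; intros i j.
  - simpl. unfold nq, zq. simpl. rewrite Qcmult_0_l. reflexivity.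
  - rewrite gpow_S. cbn [wh wmul]. rewrite IHk, gpow_wa, gpow_wf, Ha, Hf by auto.
    replace (i + Z.of_nat k * 0)%Z with i by lia. replace (j + Z.of_nat k * 0)%Z with j by lia.
    rewrite nq_S. ring.
Qed.
Lemma E_inj q q' : E q = E q' -> q = q'.
Proof. intros H. apply (f_equal (fun w => wh w 0%Z 0%Z)) in H. simpl in H. auto. Qed.
Lemma gpow_E q k : gpow (G:=Wg) (E q) k = E (nq k * q)%Qc.
Proof.
  apply W_ext.
  - rewrite gpow_wa. simpl. lia.
  - intros i. rewrite gpow_wf by reflexivity. simpl. lia.
  - intros i j. rewrite gpow_wh by reflexivity. simpl. destruct (Z.eq_dec i 0); auto. apply Qcmult_0_r.
Qed.
Lemma gpow_ga k : gpow (G:=Wg) ga k = mkW (Z.of_nat k) (fun _ => 0%Z) (fun _ _ => 0%Qc).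
Proof.
  induction k; [reflexivity|]. rewrite gpow_S, IHk. apply W_ext; cbn [wa wf wh wmul ga]; intros; try lia.
  apply Qcplus_0_l.
Qed.

Lemma in_gens_ga : in_gen (G:=Wg) gens ga. Proof. apply in_gen_gen. simpl; auto. Qed.
Lemma in_gens_gb : in_gen (G:=Wg) gens gb. Proof. apply in_gen_gen. simpl; auto. Qed.
Lemma in_gens_gc : in_gen (G:=Wg) gens gc. Proof. apply in_gen_gen. simpl; auto. Qed.
Lemma in_gens_pow w k : in_gen (G:=Wg) gens w -> in_gen (G:=Wg) gens (gpow w k).
Proof. intros H. induction k; simpl; [constructor|]. apply (in_gen_mul Wg); auto. Qed.

Lemma realize x : 1 <= x -> X x -> in_gen (G:=Wg) gens (E (/ zq (Z.of_nat x))%Qc).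
Proof.
  intros Hx HX. set (d := Z.of_nat x).
  set (Ad := gpow (G:=Wg) ga x).
  assert (HAd : in_gen (G:=Wg) gens Ad) by (apply in_gens_pow, in_gens_ga).
  assert (Ad = mkW d (fun _ => 0%Z) (fun _ _ => 0%Qc)) as EAd by (apply gpow_ga).
  set (bd := wmul (wmul Ad gb) (winv Ad)).
  assert (Hbd : in_gen (G:=Wg) gens bd).
  { apply (in_gen_mul Wg); [apply (in_gen_mul Wg); auto; apply in_gens_gb|apply (in_gen_inv Wg); auto]. }
  assert (bd = mkW 0 (dl d) (fun _ _ => 0%Qc)) as Ebd.
  { unfold bd. rewrite EAd. apply W_ext; simpl; intros.
    - lia.
    - unfold dl. replace (i + - d + d)%Z with i by lia. replace (i + - d - d)%Z with (i - d - d)%Z by lia.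
      destruct (Z.eq_dec (i + - d) 0), (Z.eq_dec i d); lia.
    - apply Qc_is_canon. simpl. reflexivity. }
  set (Ew := mkW 0 (fun _ => 0%Z) (fun i j => (rr i * zq (dl d i))%Qc)).
  assert (wmul gc bd = wmul Ew (wmul bd gc)) as Eq1.
  { rewrite Ebd. apply W_ext; cbn [wa wf wh wmul gc Ew]; intros; [lia| |].
    - rewrite !Z.add_0_r, Z.add_0_l; reflexivity.
    - rewrite !Z.add_0_r. rewrite zq_add. ring. }
  assert (Ew = wmul (wmul gc bd) (winv (wmul bd gc))) as Eq2.
  { rewrite Eq1. rewrite <- (wmulA Ew). rewrite wmulVr, wmul1r. reflexivity. }
  assert (HEw : in_gen (G:=Wg) gens Ew).
  { rewrite Eq2. apply (in_gen_mul Wg); [apply (in_gen_mul Wg); auto; apply in_gens_gc|].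
    apply (in_gen_inv Wg). apply (in_gen_mul Wg); auto. apply in_gens_gc. }
  assert (E (/ zq d)%Qc = wmul (wmul (winv Ad) Ew) Ad) as Eq3.
  { rewrite EAd. apply W_ext; simpl; intros; [lia|lia|].
    unfold dl. replace (i + d - d)%Z with i by lia.
    destruct (Z.eq_dec i 0) as [->|Hi].
    - destruct (Z.eq_dec (0 + d) d); [|lia]. simpl. unfold rr, Xd.
      destruct (excluded_middle_informative _) as [_|Hn].
      + rewrite zq1. ring.
      + exfalso. apply Hn. split; [lia|]. unfold d. rewrite Nat2Z.id. auto.
    - destruct (Z.eq_dec (i + d) d); [lia|]. rewrite zq0. ring. }
  rewrite Eq3. apply (in_gen_mul Wg); [apply (in_gen_mul Wg); auto; apply (in_gen_inv Wg); auto|auto].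
Qed.

Definition Gs : group := Subg Wg gens.
Lemma X1 : X 1. Proof. exists 0. apply Nat.divide_1_l. Qed.
Lemma z_in : in_gen (G:=Wg) gens (E 1%Qc).
Proof. pose proof (realize 1 (le_n 1) X1) as H. simpl in H. exact H. Qed.
Definition z' : Gs := lift Wg gens (E 1%Qc) z_in.
Definition hl : list Gs := [z'].

Lemma wmulE q1 q2 : wmul (E q1) (E q2) = E (q1 + q2)%Qc.
Proof. apply W_ext; simpl; intros; [lia|lia|]. destruct (Z.eq_dec i 0), (Z.eq_dec (i + 0) 0); try lia; ring. Qed.
Lemma winvE q : winv (E q) = E (- q)%Qc.
Proof. apply W_ext; simpl; intros; [lia|lia|]. destruct (Z.eq_dec i 0), (Z.eq_dec (i - 0) 0); try lia; ring. Qed.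
Lemma E0 : E 0%Qc = wone.
Proof. apply W_ext; simpl; intros; auto. destruct (Z.eq_dec i 0); auto. Qed.

Definition pj (y : Gs) : W := proj1_sig y.
Lemma pj_mul x y : pj (gmul Gs x y) = wmul (pj x) (pj y). Proof. reflexivity. Qed.
Lemma pj_inv x : pj (ginv Gs x) = winv (pj x). Proof. reflexivity. Qed.
Lemma pj_one : pj (gone Gs) = wone. Proof. reflexivity. Qed.
Lemma pj_z : pj z' = E 1%Qc. Proof. reflexivity. Qed.
Lemma pj_inj x y : pj x = pj y -> x = y. Proof. intros H. apply (sub_ext Wg gens x y). exact H. Qed.
Lemma pj_pow x k : pj (gpow x k) = gpow (G:=Wg) (pj x) k. Proof. exact (sub_gpow Wg gens x k). Qed.

Lemma Hchar (y : Gs) : in_gen hl y <-> exists m, pj y = E (zq m).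
Proof.
  split.
  - induction 1.
    + exists 0%Z. rewrite pj_one, zq0, E0. reflexivity.
    + destruct H as [<-|[]]. destruct IHin_gen as [m Hm]. exists (m + 1)%Z.
      rewrite pj_mul, Hm, pj_z, wmulE, zq_add, zq1. f_equal. ring.
    + destruct H as [<-|[]]. destruct IHin_gen as [m Hm]. exists (m - 1)%Z.
      rewrite pj_mul, pj_inv, Hm, pj_z, winvE, wmulE, zq_sub, zq1. f_equal. ring.
  - intros [m Hm].
    assert (forall k : nat, forall y : Gs, pj y = E (zq (Z.of_nat k)) \/ pj y = E (zq (- Z.of_nat k)) -> in_gen hl y) as Hk.
    { induction k; intros y0 Hy.
      - replace y0 with (gone Gs); [constructor|]. apply pj_inj. rewrite pj_one.
        destruct Hy as [Hy|Hy]; rewrite Hy; simpl; rewrite zq0, E0; reflexivity.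
      - destruct Hy as [Hy|Hy].
        + replace y0 with (gmul Gs z' (gmul Gs (ginv Gs z') y0)).
          * constructor; [simpl; auto|]. apply IHk. left. rewrite pj_mul, pj_inv, Hy, pj_z, winvE, wmulE.
            f_equal. rewrite Nat2Z.inj_succ. unfold Z.succ. rewrite zq_add, zq1. ring.
          * rewrite gmulA, gmulVr, gmul1l. reflexivity.
        + replace y0 with (gmul Gs (ginv Gs z') (gmul Gs z' y0)).
          * apply gen_mulV; [simpl; auto|]. apply IHk. right. rewrite pj_mul, Hy, pj_z, wmulE.
            f_equal. rewrite Nat2Z.inj_succ. unfold Z.succ. rewrite zq_opp, zq_add, zq_opp, zq1. ring.
          * rewrite gmulA, gmulVl, gmul1l. reflexivity. }
    apply (Hk (Z.to_nat (Z.abs m))). destruct (Z.le_gt_cases 0 m).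
    + left. rewrite Hm. f_equal. f_equal. lia.
    + right. rewrite Hm. f_equal. f_equal. lia.
Qed.

Lemma tf : torsion_free Gs.
Proof.
  intros g k Hk H. apply pj_inj. apply (f_equal pj) in H.
  rewrite pj_pow, pj_one in H. rewrite pj_one.
  set (w := pj g) in *. clearbody w.
  assert (wa w = 0%Z) as Ha.
  { apply (f_equal wa) in H. rewrite gpow_wa in H. simpl in H. nia. }
  assert (forall i, wf w i = 0%Z) as Hf.
  { intros i. apply (f_equal (fun x => wf x i)) in H. rewrite gpow_wf in H by auto. simpl in H. nia. }
  apply W_ext; auto. intros i j. apply (f_equal (fun x => wh x i j)) in H. rewrite gpow_wh in H by auto.
  simpl in *. apply (nq_cancel k); auto. rewrite H. ring.
Qed.

Definition Lg : list Gs := [lift Wg gens ga in_gens_ga; lift Wg gens gb in_gens_gb; lift Wg gens gc in_gens_gc].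
Lemma Lg_has s : In s gens -> exists s', In s' Lg /\ pj s' = s.
Proof.
  intros H. destruct H as [<-|[<-|[<-|[]]]]; eexists; split;
  [left; reflexivity| |right; left; reflexivity| |right; right; left; reflexivity|]; reflexivity.
Qed.
Lemma fg : finitely_generated Gs.
Proof.
  exists Lg.
  assert (forall w, in_gen (G:=Wg) gens w -> forall y : Gs, pj y = w -> in_gen Lg y) as Hm.
  { induction 1; intros y Hy.
    - replace y with (gone Gs) by (apply pj_inj; rewrite Hy; reflexivity). constructor.
    - destruct (Lg_has _ H) as [s' [Hs' Es']].
      replace y with (gmul Gs s' (gmul Gs (ginv Gs s') y)) by (rewrite gmulA, gmulVr, gmul1l; reflexivity).
      constructor; auto. apply IHin_gen. rewrite pj_mul, pj_inv, Hy, Es'. simpl.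
      rewrite wmulA, wmulVl, wmul1l. reflexivity.
    - destruct (Lg_has _ H) as [s' [Hs' Es']].
      replace y with (gmul Gs (ginv Gs s') (gmul Gs s' y)) by (rewrite gmulA, gmulVl, gmul1l; reflexivity).
      apply gen_mulV; auto. apply IHin_gen. rewrite pj_mul, Hy, Es'. simpl.
      rewrite wmulA, wmulVr, wmul1l. reflexivity. }
  intros y. apply (Hm (pj y)); auto. exact (proj2_sig y).
Qed.

Lemma spec_char n : spectrum (G:=Gs) (in_gen hl) n <-> n = 0 \/ (1 <= n /\ X n).
Proof.
  split.
  - intros [g [[Hn [Hin Hmin]]|[-> _]]]; [right|left; auto]. split; auto.
    apply Hchar in Hin. destruct Hin as [m Hm]. rewrite pj_pow in Hm.
    assert (Hinv : Inv (pj g)) by (apply Inv_gen; exact (proj2_sig g)).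
    remember (pj g) as w eqn:Hw.
    assert (wa w = 0%Z) as Ha.
    { apply (f_equal wa) in Hm. rewrite gpow_wa in Hm. simpl in Hm. nia. }
    assert (forall i, wf w i = 0%Z) as Hf.
    { intros i. apply (f_equal (fun x => wf x i)) in Hm. rewrite gpow_wf in Hm by auto. simpl in Hm. nia. }
    set (q := wh w 0%Z 0%Z).
    assert (w = E q) as Ew.
    { apply W_ext; auto. intros i j. simpl. pose proof (f_equal (fun x => wh x i j) Hm) as H1.
      pose proof (f_equal (fun x => wh x 0%Z 0%Z) Hm) as H2. simpl in H1, H2.
      rewrite gpow_wh in H1, H2 by auto. apply (nq_cancel n); auto.
      rewrite H1. destruct (Z.eq_dec i 0); [rewrite <- H2; reflexivity | ring]. }
    assert (Rs q) as [t [M HM]] by apply Hinv.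
    assert (forall k, 1 <= k -> (exists m', (nq k * q)%Qc = zq m') -> in_gen hl (gpow g k)) as Hk.
    { intros k _ [m' Hm']. apply Hchar. exists m'. rewrite pj_pow, <- Hw, Ew, gpow_E, Hm'. reflexivity. }
    assert (exists m0, (nq n * q)%Qc = zq m0) as [m0 Hm0].
    { exists m. rewrite Ew, gpow_E in Hm. apply E_inj in Hm. auto. }
    exists t. pose proof (Nat.div_mod (Qf t) n ltac:(lia)) as Hd.
    set (a := Qf t / n) in *. set (b := Qf t mod n) in *.
    assert (b < n) by (apply Nat.mod_upper_bound; lia).
    destruct (Nat.eq_dec b 0) as [Hb|Hb].
    + exists a. lia.
    + exfalso. apply (Hmin b); [lia|lia|]. apply Hk; [lia|].
      exists (M - Z.of_nat a * m0)%Z. rewrite zq_sub, zq_mul. fold (nq a). rewrite <- HM, <- Hm0.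
      rewrite Hd. rewrite nq_add, nq_mul. ring.
  - intros [->|[Hn HX]].
    + exists (lift Wg gens ga in_gens_ga). right. split; auto. intros k Hk Hin.
      apply Hchar in Hin. destruct Hin as [m Hm]. rewrite pj_pow in Hm. simpl in Hm.
      apply (f_equal wa) in Hm. rewrite gpow_wa in Hm. simpl in Hm. lia.
    + exists (lift Wg gens _ (realize n Hn HX)). left. split; auto.
      assert (forall k, pj (gpow (lift Wg gens _ (realize n Hn HX)) k) = E (nq k * / zq (Z.of_nat n))%Qc) as Hp.
      { intros k. rewrite pj_pow. apply gpow_E. }
      assert (zq (Z.of_nat n) <> 0%Qc) by (apply zq_nz; lia).
      split.
      * apply Hchar. exists 1%Z. rewrite Hp. f_equal. rewrite zq1. unfold nq. field. auto.
      * intros k Hk1 Hk2 Hin. apply Hchar in Hin. destruct Hin as [m Hm]. rewrite Hp in Hm.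
        apply E_inj in Hm. unfold nq in Hm.
        assert (zq (Z.of_nat k) = zq (m * Z.of_nat n)) as E2.
        { rewrite zq_mul, <- Hm. field. auto. }
        apply zq_inj in E2. destruct (Z.le_gt_cases m 0); nia.
Qed.
End Construction.

Open Scope nat_scope.

Lemma group_family (Qf : nat -> nat) : (forall t, 1 <= Qf t) -> (forall t t', t <= t' -> Nat.divide (Qf t) (Qf t')) ->
  exists (G : group) (h : list G), finitely_generated G /\ torsion_free G /\
    forall n, spectrum (in_gen h) n <-> n = 0 \/ (1 <= n /\ exists t, Nat.divide n (Qf t)).
Proof.
  intros Hp Hm. exists (Gs Qf), (hl Qf). split; [apply fg|]. split; [apply tf|]. apply spec_char; auto.
Qed.

Lemma spec_sylv (b : nat -> nat -> bool) (bmono : forall k t t', b k t = true -> t <= t' -> b k t' = true)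
  (S : nat -> Prop) : (forall n, S n <-> n = 0 \/ (1 <= n /\ exists t, Nat.divide n (Qb b t))) ->
  forall k, S (sylv k) <-> exists t, b k t = true.
Proof.
  intros HS k. rewrite HS. pose proof (sylv_ge2 k). rewrite <- (sylv_Qb b bmono). split.
  - intros [|[_ ?]]; auto; lia.
  - intros ?; right; split; auto; lia.
Qed.

Definition B1 k := forall f, enc f = k -> ~ (exists y, eval f [sylv k] y).
Definition b1 (k t : nat) : bool := if excluded_middle_informative (B1 k) then true else false.

Theorem part1 : exists (G : group) (h : list G),
      finitely_generated G /\ torsion_free G /\ ~ comp_enum (spectrum (in_gen h)).
Proof.
  assert (bm : forall k t t', b1 k t = true -> t <= t' -> b1 k t' = true) by (unfold b1; auto).
  destruct (group_family (Qb b1) (Qb_pos b1) (Qb_mono b1 bm)) as [G [h [Hfg [Htf Hs]]]].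
  exists G, h. split; auto. split; auto. intros [f Hf].
  pose proof (spec_sylv b1 bm _ Hs (enc f)) as H1.
  assert ((exists t, b1 (enc f) t = true) <-> B1 (enc f)) as H2.
  { unfold b1. split.
    - intros [t Ht]. destruct (excluded_middle_informative _); auto; discriminate.
    - intros HB. exists 0. destruct (excluded_middle_informative _); auto. }
  assert (B1 (enc f) <-> ~ exists y, eval f [sylv (enc f)] y) as H3.
  { split. - intros HB. apply HB; auto.
    - intros Hn f' Ef'. apply enc_inj in Ef'. subst. auto. }
  specialize (Hf (sylv (enc f))). tauto.
Qed.

Definition initk k := ev k (cns k 0) 0.
Definition b2 (k t : nat) : bool := Nat.eqb (finalb (iterf t (initk k))) 1.
Lemma b2_mono k t t' : b2 k t = true -> t <= t' -> b2 k t' = true.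
Proof. unfold b2. intros H Hl. apply Nat.eqb_eq in H. apply Nat.eqb_eq. eapply final_mono; eauto. Qed.

Definition eSylv := ERec (enum 2) (EAdd (EMul V1 (ESub V1 one)) one) V0 EZero.
Lemma den_eSylv k : den eSylv [k] = sylv k.
Proof. unfold eSylv, sylv. cbn [den nth]. rewrite den_enum. reflexivity. Qed.
Definition eInit := mEv V0 (mCns V0 EZero) EZero.
Lemma den_eInit k : den eInit [k] = initk k.
Proof. unfold eInit, mEv, initk. dsimp. reflexivity. Qed.
Definition ePt := ERec one (EMul V1 (ESel (mFinal (mIter V2 (ECall1 eInit V0))) one (ECall1 eSylv V0))) V0 V0.
Lemma finalb01 s : finalb s = 0 \/ finalb s = 1.
Proof. unfold finalb. destruct (_ + _); [destruct (p2 (p2 s))|]; simpl; auto. Qed.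
Lemma den_ePt t : den ePt [t] = Qb b2 t.
Proof.
  unfold ePt, Qb, prodf. cbn [den nth].
  generalize t at 2 4 as n. intros n. induction n as [|k IH]; [reflexivity|]. cbn [nat_rect]. rewrite IH.
  f_equal. autorewrite with dn. cbn [den nth]. rewrite den_eInit, den_eSylv.
  unfold fct, b2. destruct (finalb01 (iterf t (initk k))) as [E|E]; rewrite E; reflexivity.
Qed.

Definition eTest := ESel V1 EZero (EAdd (ESub (EMul (mP2 V0) V1) (ECall1 ePt (mP1 V0)))
                                        (ESub (ECall1 ePt (mP1 V0)) (EMul (mP2 V0) V1))).
Lemma den_eTest w n : den eTest [w; n] = sel n 0 ((p2 w * n - Qb b2 (p1 w)) + (Qb b2 (p1 w) - p2 w * n)).
Proof. unfold eTest. cbn [den nth]. autorewrite with dn. cbn [den nth]. rewrite den_ePt. reflexivity. Qed.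

Definition U := PMu (cmp eTest).
Lemma U_halts n : (exists y, eval U [n] y) <-> n = 0 \/ (1 <= n /\ exists t, Nat.divide n (Qb b2 t)).
Proof.
  unfold U. rewrite (mu_halts (cmp eTest) (den eTest) (cmp_ok eTest)).
  split.
  - intros [w Hw]. rewrite den_eTest in Hw. destruct n; [auto|]. right. split; [lia|].
    exists (p1 w). exists (p2 w). cbn [sel] in Hw. lia.
  - intros [->|[Hn [t [c Hc]]]].
    + exists 0. rewrite den_eTest. reflexivity.
    + exists (pr t c). rewrite den_eTest, p1_pr, p2_pr. destruct n; [lia|]. cbn [sel]. lia.
Qed.

Lemma comp1_inv f c v y : eval (PComp f [c]) v y -> exists y1, eval c v y1 /\ eval f [y1] y.
Proof.
  intros H. inversion H; subst. inversion H2; subst. inversion H7; subst. eauto.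
Qed.

Theorem part2 : exists (G : group) (h : list G),
      finitely_generated G /\ torsion_free G /\
      comp_enum (spectrum (in_gen h)) /\ ~ computable (spectrum (in_gen h)).
Proof.
  destruct (group_family (Qb b2) (Qb_pos b2) (Qb_mono b2 b2_mono)) as [G [h [Hfg [Htf Hs]]]].
  exists G, h. split; auto. split; auto. split.
  - exists U. intros n. rewrite Hs, U_halts. tauto.
  - intros [f Hf].
    set (g := PMu (PComp f [cmp (ECall1 eSylv V1)])).
    set (K := enc g).
    assert (Hg : (exists y, eval g [K] y) <-> ~ spectrum (in_gen h) (sylv K)).
    { split.
      - intros [y Hy] HS. unfold g in Hy. inversion Hy; subst.
        destruct (comp1_inv _ _ _ _ H0) as [y1 [Hy1 Hfy]].
        pose proof (cmp_ok (ECall1 eSylv V1) [y; K]) as Hc. cbn [den nth] in Hc. rewrite den_eSylv in Hc.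
        pose proof (eval_det _ _ _ Hy1 _ Hc) as ->.
        pose proof (eval_det _ _ _ Hfy _ (proj1 (Hf _) HS)). discriminate.
      - intros HS. exists 0. unfold g. constructor; [|intros; lia].
        econstructor.
        + constructor; [|constructor]. pose proof (cmp_ok (ECall1 eSylv V1) [0; K]) as Hc.
          cbn [den nth] in Hc. rewrite den_eSylv in Hc. exact Hc.
        + apply (proj2 (Hf _)). exact HS. }
    assert (HB : (exists t, b2 K t = true) <-> exists y, eval g [K] y).
    { rewrite machine_correct. unfold b2, initk. simpl encl. fold K.
      split; intros [t Ht]; exists t; [apply Nat.eqb_eq in Ht|apply Nat.eqb_eq]; auto. }
    pose proof (spec_sylv b2 b2_mono _ Hs K). tauto.
Qed.

Theorem corollary4p4 :
  (exists (G : group) (h : list G),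
      finitely_generated G /\ torsion_free G /\
      ~ comp_enum (spectrum (in_gen h)))
  /\
  (exists (G : group) (h : list G),
      finitely_generated G /\ torsion_free G /\
      comp_enum (spectrum (in_gen h)) /\ ~ computable (spectrum (in_gen h))).
Proof. split; [apply part1|apply part2]. Qed.
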